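(* Let $0<b<B$. For every instance $\langle A,f,c\rangle$ (with $f$ monotone) such that $p(\{i\})\le b$ for all $i\in A$, $$\frac{\textsc{Max-Profit}(B)}{\textsc{Max-Profit}(b)}\le\frac{\textsc{Max-Reward}(B)}{\textsc{Max-Reward}(b)}.$$
   Context: An instance $\langle A,f,c\rangle$ consists of a finite set $A$ of agents, a monotone nondecreasing $f:2^A\to[0,1]$, and costs $c_i\ge0$. For $S\subseteq A$, $i\in S$: $f_S(i)=f(S)-f(S\setminus\{i\})$; $p(S)=\sum_{i\in S}c_i/f_S(i)$ (conventions: $0$ if $c_i=0=f_S(i)$, $\infty$ if $c_i>0=f_S(i)$); the profit is $g(S)=(1-p(S))f(S)$. $\textsc{Max-Profit}(B)=\max\{g(S):p(S)\le B\}$ and $\textsc{Max-Reward}(B)=\max\{f(S):p(S)\le B\}$. *)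

(* Defs.v *)
From HB Require Import structures.
From mathcomp Require Import all_boot all_order all_algebra.
From mathcomp Require Import constructive_ereal.
Set Implicit Arguments. Unset Strict Implicit. Unset Printing Implicit Defensive.
Import Order.TTheory GRing.Theory Num.Theory.
Local Open Scope ring_scope.

Section Contract.
Variables (R : realFieldType) (A : finType).
Variables (f : {set A} -> R) (c : A -> R).

Definition marg (S : {set A}) (i : A) : R := f S - f (S :\ i).

(* p(S) = sum_{i in S} c_i / f_S(i), with value +oo when some c_i > 0 = f_S(i);
   when c_i = 0 = f_S(i) the term c_i / f_S(i) is 0 (this is also MathComp's
   convention x / 0 = 0). *)
Definition price (S : {set A}) : \bar R :=
  if [exists i in S, (0 < c i) && (marg S i == 0)] then +oo%E
  else (\sum_(i in S) c i / marg S i)%:E.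

(* g(S) = (1 - p(S)) f(S); only used for sets with finite price. *)
Definition profit (S : {set A}) : R := (1 - fine (price S)) * f S.

(* The empty set is always feasible for B >= 0 (p(empty) = 0), so using its value as
   the initial element of the max is harmless. *)
Definition MaxProfit (B : R) : R :=
  \big[Num.max/profit set0]_(S : {set A} | (price S <= B%:E)%E) profit S.

Definition MaxReward (B : R) : R :=
  \big[Num.max/f set0]_(S : {set A} | (price S <= B%:E)%E) f S.

End Contract.

(* Main.v *)
Require Import Defs.
From HB Require Import structures.
From mathcomp Require Import all_boot all_order all_algebra.
From mathcomp Require Import constructive_ereal.
From mathcomp Require Import lra.
Import Order.TTheory GRing.Theory Num.Theory.
Local Open Scope ring_scope.

Lemma bigmax_ge (R : realFieldType) (T : eqType) (r : seq T) (P : pred T)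
  (F : T -> R) x0 i : i \in r -> P i ->
  F i <= \big[Num.max/x0]_(j <- r | P j) F j.
Proof.
elim: r => // a r IH; rewrite in_cons big_cons => /orP[/eqP<- -> | ir Pi].
  by rewrite le_max lexx.
have := IH ir Pi; case: ifP => _ // h.
by rewrite le_max h orbT.
Qed.

Arguments bigmax_ge {R T r P F x0 i}.

Lemma bigmax_ge0 (R : realFieldType) (T : Type) (r : seq T) (P : pred T)
  (F : T -> R) x0 : x0 <= \big[Num.max/x0]_(j <- r | P j) F j.
Proof.
elim: r => [|a r IH]; first by rewrite big_nil.
by rewrite big_cons; case: ifP => // _; rewrite le_max IH orbT.
Qed.

Arguments bigmax_ge0 {R T}.

Lemma bigmax_le (R : realFieldType) (T : Type) (r : seq T) (P : pred T)
  (F : T -> R) x0 M : x0 <= M -> (forall j, P j -> F j <= M) ->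
  \big[Num.max/x0]_(j <- r | P j) F j <= M.
Proof.
move=> h0 hF; apply: (big_ind (fun v => v <= M)) => //.
by move=> x y hx hy; rewrite ge_max hx hy.
Qed.

Lemma price_fin (R : realFieldType) (A : finType) (f : {set A} -> R) (c : A -> R)
  (S : {set A}) (x : R) :
  (forall S T : {set A}, S \subset T -> f S <= f T) ->
  (forall i : A, 0 <= c i) ->
  (price f c S <= x%:E)%E ->
  price f c S = (fine (price f c S))%:E /\ 0 <= fine (price f c S).
Proof.
move=> mon c0; rewrite /price; case: ifP => // _ _; split => //=.
apply: sumr_ge0 => i iS; apply: divr_ge0 => //.
by rewrite /marg subr_ge0; apply: mon; apply: subsetDl.
Qed.

Theorem mainTheorem17 (R : realFieldType) (b B : R) (A : finType)
  (f : {set A} -> R) (c : A -> R) :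
  0 < b -> b < B ->
  (forall S : {set A}, 0 <= f S <= 1) ->
  (forall S T : {set A}, S \subset T -> f S <= f T) ->
  (forall i : A, 0 <= c i) ->
  (forall i : A, (price f c [set i] <= b%:E)%E) ->
  MaxProfit f c B / MaxProfit f c b <= MaxReward f c B / MaxReward f c b.
Proof.
move=> b0 bB f01 mon c0 _.
have f0 S : 0 <= f S by case/andP: (f01 S).
have p0 : price f c set0 = 0%:E.
  rewrite /price; case: ifP => [/existsP[i]|_]; first by rewrite inE.
  by rewrite big_set0.
have pr0 : profit f c set0 = f set0 by rewrite /profit p0 /= subr0 mul1r.
have profit_le S x : (price f c S <= x%:E)%E ->
   profit f c S = (1 - fine (price f c S)) * f S /\ 0 <= fine (price f c S)
   /\ fine (price f c S) <= x.
  move=> h; have [e pe] := @price_fin _ _ f c _ _ mon c0 h; split => //; split => //.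
  by move: h; rewrite e lee_fin.
set PB := MaxProfit f c B; set Pb := MaxProfit f c b.
set RB := MaxReward f c B; set Rb := MaxReward f c b.
have Rb0 : 0 <= Rb.
  rewrite /PB /Pb /RB /Rb /MaxProfit /MaxReward; apply: le_trans (f0 set0) (bigmax_ge0 _ _ _ _).
have Pb0 : 0 <= Pb by rewrite /PB /Pb /RB /Rb /MaxProfit /MaxReward; apply: le_trans (f0 set0) _; rewrite -pr0; apply: bigmax_ge0.
have RbB : Rb <= RB.
  rewrite /PB /Pb /RB /Rb /MaxProfit /MaxReward; 
  apply: bigmax_le; first exact: bigmax_ge0.
  move=> S hS; apply: bigmax_ge; first by rewrite mem_index_enum.
  by apply: le_trans hS _; rewrite lee_fin ltW.
have PbRb : Pb <= Rb.
  rewrite /PB /Pb /RB /Rb /MaxProfit /MaxReward; 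
  apply: bigmax_le; first by rewrite pr0; apply: bigmax_ge0.
  move=> S hS; have [-> [h1 h2]] := profit_le _ _ hS.
  apply: le_trans (bigmax_ge (mem_index_enum S) hS).
  have := f0 S; nra.
have key : PB <= Pb \/ (b < 1 /\ PB <= (1 - b) * RB /\ (1 - b) * Rb <= Pb).
  have [b1|b1] := ltP b 1; last first.
    left; apply: bigmax_le; first by rewrite pr0 -(pr0) ; apply: bigmax_ge0.
    move=> S hS; have [e [h1 h2]] := profit_le _ _ hS.
    have [Sb|Sb] := leP (fine (price f c S)) b.
      apply: bigmax_ge; first by rewrite mem_index_enum.
      by have [e' _] := @price_fin _ _ f c _ _ mon c0 hS; rewrite e' lee_fin.
    rewrite e; apply: le_trans Pb0; have := f0 S; nra.
  have H2 : (1 - b) * Rb <= Pb.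
    rewrite mulrC -ler_pdivlMr ?subr_gt0 //; rewrite {1}/Rb /MaxReward; apply: bigmax_le.
      rewrite ler_pdivlMr ?subr_gt0 // -pr0.
      apply: le_trans (bigmax_ge0 _ _ _ _); rewrite pr0; have := f0 set0; nra.
    move=> S hS; rewrite ler_pdivlMr ?subr_gt0 //.
    have [e [h1 h2]] := profit_le _ _ hS.
    apply: le_trans (bigmax_ge (mem_index_enum S) hS).
    rewrite e; have := f0 S; nra.
  have HM : PB <= Num.max Pb ((1 - b) * RB).
    rewrite {1}/PB /MaxProfit; apply: bigmax_le.
      by rewrite le_max /Pb /MaxProfit pr0 -pr0 bigmax_ge0.
    move=> S hS; have [e [h1 h2]] := profit_le _ _ hS.
    have [Sb|Sb] := leP (fine (price f c S)) b.
      rewrite le_max; apply/orP; left.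
      rewrite /Pb /MaxProfit; apply: bigmax_ge; first by rewrite mem_index_enum.
      by have [e' _] := @price_fin _ _ f c _ _ mon c0 hS; rewrite e' lee_fin.
    rewrite le_max; apply/orP; right.
    have fR : f S <= RB by rewrite /RB /MaxReward; apply: bigmax_ge; rewrite ?mem_index_enum.
    rewrite e; have := f0 S; nra.
  move: HM; rewrite le_max => /orP[]; first by left.
  by move=> h; right.
have [Pbz|Pbpos] := eqVneq Pb 0.
  by rewrite Pbz invr0 mulr0 divr_ge0 // (le_trans Rb0 RbB).
have Pbp : 0 < Pb by rewrite lt_def Pbpos Pb0.
have Rbp : 0 < Rb by apply: lt_le_trans PbRb.
rewrite ler_pdivrMr // mulrAC ler_pdivlMr //.
case: key => [h|[h1 [h2 h3]]].
  have := RbB; nra.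
have := RbB; nra.
Qed.
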